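(* Let $R$ be a commutative ring and $\mathfrak{a}\subseteq R$ an ideal. (a) If some power $\mathfrak{a}^n$ ($n\geq1$) is finitely generated, or if $\mathfrak{a}$ is generated by idempotents, then $\Gamma_\mathfrak{a}=\overline{\Gamma}_\mathfrak{a}$. (b) If $R$ is noetherian or absolutely flat (von Neumann regular), then $\Gamma_\mathfrak{a}=\overline{\Gamma}_\mathfrak{a}$. (c) If $\mathfrak{b}\subseteq R$ is an ideal with $\mathfrak{a}\subseteq\mathfrak{b}\subseteq\sqrt{\mathfrak{a}}$ and $\Gamma_\mathfrak{b}=\overline{\Gamma}_\mathfrak{b}$, then $\Gamma_\mathfrak{a}=\overline{\Gamma}_\mathfrak{a}$. (d) If $M$ is a noetherian $R$-module, then $\Gamma_\mathfrak{a}(M)=\overline{\Gamma}_\mathfrak{a}(M)$.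
   Context: For an $R$-module $M$: $\Gamma_\mathfrak{a}(M)=\{x\in M\mid \exists n\in\mathbb{N}:\mathfrak{a}^n\subseteq(0:_Rx)\}$ and $\overline{\Gamma}_\mathfrak{a}(M)=\{x\in M\mid \mathfrak{a}\subseteq\sqrt{(0:_Rx)}\}$; $\Gamma_\mathfrak{a}=\overline{\Gamma}_\mathfrak{a}$ means equality for every $R$-module $M$. *)

(* Defs.v *)
From HB Require Import structures.
From mathcomp Require Import all_boot all_order all_algebra.
Set Implicit Arguments. Unset Strict Implicit. Unset Printing Implicit Defensive.
Import GRing.Theory.
Local Open Scope ring_scope.

Definition is_ideal (R : comPzRingType) (I : R -> Prop) : Prop :=
  [/\ I 0, (forall x y, I x -> I y -> I (x + y)) & (forall r x, I x -> I (r * x))].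

Definition ideal_span (R : comPzRingType) (S : R -> Prop) : R -> Prop :=
  fun x => exists s : seq (R * R),
    (forall p, p \in s -> S p.2) /\ x = \sum_(p <- s) p.1 * p.2.

Definition ideal_mul (R : comPzRingType) (I J : R -> Prop) : R -> Prop :=
  ideal_span (fun x => exists i j, I i /\ J j /\ x = i * j).

Fixpoint ideal_pow (R : comPzRingType) (I : R -> Prop) (n : nat) : R -> Prop :=
  match n with
  | O => fun _ => True
  | S m => ideal_mul (ideal_pow I m) I
  end.

Definition ideal_fg (R : comPzRingType) (I : R -> Prop) : Prop :=
  exists g : seq R, forall x, I x <-> ideal_span (fun y => y \in g) x.

Definition gen_by_idempotents (R : comPzRingType) (I : R -> Prop) : Prop :=
  exists E : R -> Prop, (forall e, E e -> e * e = e) /\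
    (forall x, I x <-> ideal_span E x).

Definition ideal_rad (R : comPzRingType) (I : R -> Prop) : R -> Prop :=
  fun x => exists n : nat, I (x ^+ n).

Definition noetherian_ring (R : comPzRingType) : Prop :=
  forall I : R -> Prop, is_ideal I -> ideal_fg I.

(* absolutely flat = von Neumann regular *)
Definition absolutely_flat (R : comPzRingType) : Prop :=
  forall x : R, exists y, x = x * x * y.

Definition Gamma (R : comPzRingType) (a : R -> Prop) (M : lmodType R) (x : M) : Prop :=
  exists n : nat, forall r, ideal_pow a n r -> r *: x = 0.

Definition Gammabar (R : comPzRingType) (a : R -> Prop) (M : lmodType R) (x : M) : Prop :=
  forall r, a r -> exists k : nat, r ^+ k *: x = 0.

Definition Gamma_eq (R : comPzRingType) (a : R -> Prop) : Prop :=
  forall (M : lmodType R) (x : M), Gamma a x <-> Gammabar a x.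

Definition is_submodule (R : comPzRingType) (M : lmodType R) (N : M -> Prop) : Prop :=
  [/\ N 0, (forall x y, N x -> N y -> N (x + y)) & (forall (r : R) x, N x -> N (r *: x))].

Definition mod_span (R : comPzRingType) (M : lmodType R) (S : M -> Prop) : M -> Prop :=
  fun x => exists s : seq (R * M),
    (forall p, p \in s -> S p.2) /\ x = \sum_(p <- s) p.1 *: p.2.

Definition noetherian_module (R : comPzRingType) (M : lmodType R) : Prop :=
  forall N : M -> Prop, is_submodule N ->
    exists g : seq M, forall x, N x <-> mod_span (fun y => y \in g) x.

(* Main.v *)
Require Import Defs.
From HB Require Import structures.
From mathcomp Require Import all_boot all_order all_algebra.
Set Implicit Arguments. Unset Strict Implicit. Unset Printing Implicit Defensive.
Import GRing.Theory.
Local Open Scope ring_scope.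

Section Aux.
Variable R : comPzRingType.

Fixpoint Qk (P : R -> Prop) (M : lmodType R) (N : nat) (y : M) : Prop :=
  match N with
  | O => y = 0
  | S n => forall j, P j -> Qk P n (j *: y)
  end.

Lemma scaleC (M : lmodType R) (j c : R) (y : M) : j *: (c *: y) = c *: (j *: y).
Proof. by rewrite !scalerA mulrC. Qed.

Lemma Q0 P (M : lmodType R) N : Qk P N (0 : M).
Proof. elim: N => [|N IH] //= j _; by rewrite scaler0. Qed.

Lemma QD P (M : lmodType R) N (y z : M) : Qk P N y -> Qk P N z -> Qk P N (y + z).
Proof.
elim: N y z => [|N IH] y z /=; first by move=> -> ->; rewrite addr0.
move=> Hy Hz j Pj; rewrite scalerDr; apply: IH; [exact: Hy|exact: Hz].
Qed.

Lemma QZ P (M : lmodType R) N (c : R) (y : M) : Qk P N y -> Qk P N (c *: y).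
Proof.
elim: N c y => [|N IH] c y /=; first by move=> ->; rewrite scaler0.
move=> Hy j Pj; rewrite scaleC; apply: IH; exact: Hy.
Qed.

Lemma Qsum P (M : lmodType R) N (s : seq (R * R)) (f : R -> M) :
  (forall p, p \in s -> Qk P N (f p.2)) -> Qk P N (\sum_(p <- s) p.1 *: f p.2).
Proof.
elim: s => [|q s IH] H; first by rewrite big_nil; apply: Q0.
rewrite big_cons; apply: QD; first by apply: QZ; apply: H; rewrite mem_head.
apply: IH => p ps; apply: H; by rewrite in_cons ps orbT.
Qed.

Lemma Qmono (P P' : R -> Prop) (M : lmodType R) N (y : M) :
  (forall r, P' r -> P r) -> Qk P N y -> Qk P' N y.
Proof.
move=> HP; elim: N y => [|N IH] y //= H j Pj; apply: IH; apply: H; exact: HP.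
Qed.

Lemma sum_scale (M : lmodType R) (s : seq (R * R)) (y : M) :
  (\sum_(p <- s) p.1 * p.2) *: y = \sum_(p <- s) p.1 *: (p.2 *: y).
Proof.
rewrite scaler_suml; apply: eq_bigr => p _; by rewrite scalerA.
Qed.

Lemma Qspan (P : R -> Prop) (M : lmodType R) N (y : M) :
  Qk P N y -> Qk (ideal_span P) N y.
Proof.
elim: N y => [|N IH] y //= H j [s [Hs ->]].
rewrite sum_scale; apply: (Qsum (f := fun r => r *: y)) => p ps.
apply: IH; apply: H; exact: Hs.
Qed.

Lemma Qunion (A B : R -> Prop) (M : lmodType R) p q (y : M) :
  Qk A p y -> Qk B q y -> Qk (fun r => A r \/ B r) (p + q) y.
Proof.
elim: p q y => [|p IHp] q y; first by move=> /= ->; move=> _; exact: Q0.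
elim: q y => [|q IHq] y; first by move=> _ /= -> j _; rewrite scaler0; apply: Q0.
move=> HA HB; rewrite addSn /= => j [Aj|Bj].
  apply: IHp; [exact: HA| exact: QZ].
rewrite -addSnnS; apply: IHq; [exact: QZ| exact: HB].
Qed.

Lemma Qsingle (M : lmodType R) (g : R) k (y : M) :
  g ^+ k *: y = 0 -> Qk (fun r => r = g) k y.
Proof.
elim: k y => [|k IH] y /=; first by rewrite expr0 scale1r.
move=> H j ->; apply: IH; by rewrite scalerA -exprSr.
Qed.

Lemma Qcore (M : lmodType R) (y : M) (gs : seq R) :
  (forall g, g \in gs -> exists k, g ^+ k *: y = 0) ->
  exists N, Qk (fun r => r \in gs) N y.
Proof.
elim: gs => [|g gs IH] H; first by exists 1%N => /= j.
have [k Hk] := H g (mem_head _ _).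
have [N HN] : exists N, Qk (fun r => r \in gs) N y.
  apply: IH => h hs; apply: H; by rewrite in_cons hs orbT.
exists (k + N)%N; apply: Qmono (Qunion (Qsingle Hk) HN).
by move=> r; rewrite in_cons => /orP [/eqP ->|]; [left|right].
Qed.

Lemma pow_mul (a : R -> Prop) n r j :
  ideal_pow a n r -> a j -> ideal_pow a n.+1 (r * j).
Proof.
move=> Hr Hj; exists [:: (1, r * j)]; split.
  move=> p; rewrite mem_seq1 => /eqP -> /=; by exists r, j.
by rewrite big_cons big_nil mul1r addr0.
Qed.

Lemma Qlem3 (a : R -> Prop) (M : lmodType R) n K (y : M) :
  (forall r, ideal_pow a n r -> Qk a K (r *: y)) -> Qk a (n + K) y.
Proof.
elim: n y => [|n IH] y H /=; first by have := H 1 I; rewrite scale1r.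
move=> j Hj; apply: IH => r Hr; rewrite scalerA; apply: H; exact: pow_mul.
Qed.

Lemma Qpow (a : R -> Prop) (M : lmodType R) n N (y : M) :
  Qk (ideal_pow a n) N y -> Qk a (n * N) y.
Proof.
elim: N y => [|N IH] y /=; first by rewrite muln0.
move=> H; rewrite mulnS; apply: Qlem3 => r Hr; apply: IH; exact: H.
Qed.

Lemma kills (a : R -> Prop) (M : lmodType R) N (y : M) :
  (forall r, ideal_pow a N r -> r *: y = 0) <-> Qk a N y.
Proof.
elim: N y => [|N IH] y /=.
  split; first by move=> H; have := H 1 I; rewrite scale1r.
  by move=> -> r _; rewrite scaler0.
split.
  move=> H j Hj; apply/IH => r Hr; rewrite scalerA; apply: H; exact: pow_mul.
move=> H r [s [Hs ->]]; rewrite sum_scale big_seq big1 // => p ps.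
have [i [j [Hi [Hj ->]]]] := Hs p ps.
by rewrite -scalerA (proj2 (IH (j *: y)) (H j Hj) i Hi) scaler0.
Qed.

Lemma GammaQ (a : R -> Prop) (M : lmodType R) (x : M) :
  Gamma a x <-> exists N, Qk a N x.
Proof.
split; move=> [N H]; exists N; [exact/kills| exact/kills].
Qed.

Lemma Q_gbar (a : R -> Prop) (M : lmodType R) N (x : M) :
  Qk a N x -> forall r, a r -> r ^+ N *: x = 0.
Proof.
elim: N x => [|N IH] x /=; first by move=> -> r _; rewrite scaler0.
move=> H r Hr; rewrite exprSr -scalerA; apply: IH => //; exact: H.
Qed.

Lemma gamma_gbar (a : R -> Prop) (M : lmodType R) (x : M) :
  Gamma a x -> Gammabar a x.
Proof. move=> /GammaQ [N H] r Hr; exists N; exact: Q_gbar H r Hr. Qed.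

Lemma span_gen (S : R -> Prop) x : S x -> ideal_span S x.
Proof.
move=> Sx; exists [:: (1, x)]; split; first by move=> p; rewrite mem_seq1 => /eqP ->.
by rewrite big_cons big_nil mul1r addr0.
Qed.

Lemma span_sub (S I : R -> Prop) x :
  is_ideal I -> (forall y, S y -> I y) -> ideal_span S x -> I x.
Proof.
move=> [I0 ID IM] HS [s [Hs ->]]; elim: s Hs => [|p s IH] Hs.
  by rewrite big_nil.
rewrite big_cons; apply: ID; first by apply: IM; apply: HS; apply: Hs; exact: mem_head.
apply: IH => q qs; apply: Hs; by rewrite in_cons qs orbT.
Qed.

Lemma span_ideal (S : R -> Prop) : is_ideal (ideal_span S).
Proof.
split.
- by exists [::]; split => //; rewrite big_nil.
- move=> x y [s1 [H1 ->]] [s2 [H2 ->]]; exists (s1 ++ s2); split.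
    by move=> p; rewrite mem_cat => /orP [/H1|/H2].
  by rewrite big_cat.
- move=> r x [s [Hs ->]]; exists (map (fun p => (r * p.1, p.2)) s); split.
    by move=> p /mapP [q qs ->] /=; apply: Hs.
  by rewrite big_map mulr_sumr; apply: eq_bigr => p _; rewrite mulrA.
Qed.

Lemma pow_sub (a : R -> Prop) n r :
  is_ideal a -> (1 <= n)%N -> ideal_pow a n r -> a r.
Proof.
move=> Ia; case: n => [//|n] _ /=; apply: span_sub => // y [i [j [_ [Hj ->]]]].
by case: Ia => _ _ IM; apply: IM.
Qed.

Lemma ann_span (S : R -> Prop) (M : lmodType R) (x : M) r :
  (forall e, S e -> e *: x = 0) -> ideal_span S r -> r *: x = 0.
Proof.
move=> H [s [Hs ->]]; rewrite sum_scale big_seq big1 // => p ps.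
by rewrite H ?scaler0 //; apply: Hs.
Qed.

Lemma idem_pow (e : R) k : e * e = e -> e ^+ k.+1 = e.
Proof. move=> He; elim: k => [|k IH]; first by rewrite expr1. by rewrite exprS IH. Qed.

Lemma partA (a : R -> Prop) : is_ideal a ->
     ((exists n : nat, (1 <= n)%N /\ ideal_fg (ideal_pow a n)) \/ gen_by_idempotents a) ->
     Gamma_eq a.
Proof.
move=> Ia [[n [n1 [g Hg]]]|[E [HE Ha]]] M x; (split; first exact: gamma_gbar) => Hx.
  have [N HN] : exists N, Qk (fun r => r \in g) N x.
    apply: Qcore => e eg; apply: Hx; apply: (pow_sub Ia n1); apply/Hg.
    exact: span_gen.
  apply/GammaQ; exists (n * N)%N; apply: Qpow.
  apply: Qmono (Qspan HN) => r /Hg //.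
apply/GammaQ; exists 1%N => /= j /Ha; apply: ann_span => e Ee.
have [k Hk] := Hx e (proj2 (Ha e) (span_gen Ee)).
case: k Hk => [|k]; first by rewrite expr0 scale1r => ->; rewrite scaler0.
by rewrite idem_pow //; apply: HE.
Qed.

Lemma vnr_pow (r y : R) m : r = r * r * y -> r ^+ m.+1 * y ^+ m = r.
Proof.
move=> H; elim: m => [|m IH]; first by rewrite expr1 expr0 mulr1.
have -> : r ^+ m.+2 * y ^+ m.+1 = (r ^+ m.+1 * y ^+ m) * (r * y).
  by rewrite [r ^+ m.+2]exprSr [y ^+ m.+1]exprSr -!mulrA; congr (_ * _);
     rewrite mulrCA.
by rewrite IH mulrA -H.
Qed.

Lemma partB : (noetherian_ring R \/ absolutely_flat R) ->
     forall a : R -> Prop, is_ideal a -> Gamma_eq a.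
Proof.
move=> [HN|HF] a Ia.
  apply: partA => //; left; exists 1%N; split => //.
  have [g Hg] := HN a Ia; exists g => r; split.
    by move=> Hr; apply/Hg; apply: (pow_sub Ia _ Hr).
  move=> /Hg Hr; exists [:: (1, 1 * r)]; split.
    move=> p; rewrite mem_seq1 => /eqP -> /=; by exists 1, r.
  by rewrite big_cons big_nil !mul1r addr0.
move=> M x; split; first exact: gamma_gbar.
move=> Hx; apply/GammaQ; exists 1%N => /= j Hj.
have [k Hk] := Hx j Hj; have [y Hy] := HF j.
case: k Hk => [|k]; first by rewrite expr0 scale1r => ->; rewrite scaler0.
move=> Hk; by rewrite -(vnr_pow k Hy) mulrC -scalerA Hk scaler0.
Qed.

Lemma partC (a b : R -> Prop) : is_ideal a -> is_ideal b ->
     (forall x, a x -> b x) -> (forall x, b x -> ideal_rad a x) ->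
     Gamma_eq b -> Gamma_eq a.
Proof.
move=> _ _ ab brad Hb M x; split; first exact: gamma_gbar.
move=> Hx; have : Gammabar b x.
  move=> r /brad [n Hn]; have [k Hk] := Hx _ Hn; exists (n * k)%N; by rewrite exprM.
move=> /Hb /GammaQ [N HN]; apply/GammaQ; exists N; exact: Qmono HN.
Qed.

Lemma map_exists (M : lmodType R) (a : R -> Prop) (x : M) (g : seq M) :
  (forall z, z \in g -> exists r, a r /\ z = r *: x) ->
  exists gs : seq R, (forall r, r \in gs -> a r) /\ g = map (fun r => r *: x) gs.
Proof.
elim: g => [|z g IH] H; first by exists [::].
have [r [ar ->]] := H z (mem_head _ _).
have [gs [Hgs ->]] : exists gs : seq R, (forall r, r \in gs -> a r) /\ g = map (fun r => r *: x) gs.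
  apply: IH => w wg; apply: H; by rewrite in_cons wg orbT.
exists (r :: gs); split => //; move=> t; rewrite in_cons => /orP [/eqP ->|]; [done|exact: Hgs].
Qed.

Lemma Qtransfer (J a : R -> Prop) (M : lmodType R) (x : M) N :
  (forall r, a r -> exists s, J s /\ r *: x = s *: x) ->
  forall t, Qk J N (t *: x) -> Qk a N (t *: x).
Proof.
move=> H; elim: N => [|N IH] t //= HJ j Hj.
rewrite scalerA; apply: IH; have [s [Js Hs]] := H j Hj.
by rewrite mulrC -scalerA Hs scaleC; apply: HJ.
Qed.

Lemma partD (a : R -> Prop) : is_ideal a ->
     forall M : lmodType R, noetherian_module M ->
     forall x : M, Gamma a x <-> Gammabar a x.
Proof.
move=> [a0 aD aM] M HM x; split; first exact: gamma_gbar.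
move=> Hx.
pose N0 := fun z : M => exists r, a r /\ z = r *: x.
have subN0 : is_submodule N0.
  split.
  - by exists 0; rewrite scale0r.
  - move=> y z [r [ar ->]] [s [as_ ->]]; exists (r + s); by rewrite scalerDl; split => //; apply: aD.
  - move=> c y [r [ar ->]]; exists (c * r); by rewrite scalerA; split => //; apply: aM.
have [g Hg] := HM N0 subN0.
have [gs [Hgs Egs]] : exists gs : seq R, (forall r, r \in gs -> a r) /\ g = map (fun r => r *: x) gs.
  apply: map_exists => z zg; apply/Hg; exists [:: (1, z)]; split.
    by move=> p; rewrite mem_seq1 => /eqP ->.
  by rewrite big_cons big_nil scale1r addr0.
have [N HN] : exists N, Qk (fun r => r \in gs) N x.
  apply: Qcore => e eg; apply: Hx; exact: Hgs.
apply/GammaQ; exists N; rewrite -(scale1r x); apply: (Qtransfer (J := ideal_span (fun r => r \in gs))).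
  move=> r ar; have : N0 (r *: x) by exists r.
  move=> /Hg [s [Hs ->]]; clear -Hs Egs.
  elim: s Hs => [|p s IH] Hs.
    by exists 0; rewrite big_nil scale0r; split => //; case: (span_ideal (fun r => r \in gs)).
  have [t [Jt Et]] : exists t, ideal_span (fun r => r \in gs) t /\
      \sum_(q <- s) q.1 *: q.2 = t *: x.
    apply: IH => q qs; apply: Hs; by rewrite in_cons qs orbT.
  have := Hs p (mem_head _ _); rewrite Egs => /mapP [r0 r0g E0].
  exists (p.1 * r0 + t); rewrite big_cons Et E0 scalerDl scalerA; split => //.
  case: (span_ideal (fun r => r \in gs)) => _ SD SM; apply: SD => //; apply: SM.
  exact: span_gen.
by rewrite scale1r; apply: Qspan.
Qed.

End Aux.

Theorem corollary4p6 (R : comPzRingType) :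
  (* (a) *)
  (forall a : R -> Prop, is_ideal a ->
     ((exists n : nat, (1 <= n)%N /\ ideal_fg (ideal_pow a n)) \/ gen_by_idempotents a) ->
     Gamma_eq a) /\
  (* (b) *)
  ((noetherian_ring R \/ absolutely_flat R) ->
     forall a : R -> Prop, is_ideal a -> Gamma_eq a) /\
  (* (c) *)
  (forall a b : R -> Prop, is_ideal a -> is_ideal b ->
     (forall x, a x -> b x) -> (forall x, b x -> ideal_rad a x) ->
     Gamma_eq b -> Gamma_eq a) /\
  (* (d) *)
  (forall a : R -> Prop, is_ideal a ->
     forall M : lmodType R, noetherian_module M ->
     forall x : M, Gamma a x <-> Gammabar a x).
Proof.
split; first exact: (@partA R).
split; first exact: (@partB R).
split; first exact: (@partC R).
exact: (@partD R).
Qed.
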